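(* Let $Q$ be a Jordan loop and $x\in Q$. Then (i) $(x^2)^{-1}x=x^{-1}$; (ii) $x^3x^{-2}=x$; (iii) $x^3x^{-1}=x^2$; (iv) $x^4(x^{-1})^3=x$; (v) $x^6x^{-2}=x^4$; (vi) $x^6x^{-4}=x^2$.
   Context: A loop is a set $Q$ with a binary operation (juxtaposition) and neutral element $e$ such that for all $a,b$ the equations $ax=b$, $ya=b$ have unique solutions. A Jordan loop is a commutative loop satisfying $x^2(yx)=(x^2y)x$. For $y\in Q$ and $k\ge 0$, $y^k$ denotes the right-associated product $y(y(\cdots(ye)\cdots))$ with $k$ factors $y$. Each $x$ has a unique two-sided inverse $x^{-1}$, and for $k\ge 1$, $x^{-k}$ denotes $(x^{-1})^k$. *)

(* Defs.v *)
From Stdlib Require Import Arith.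

Record is_loop {Q : Type} (op : Q -> Q -> Q) (e : Q) : Prop := {
  loop_left_id  : forall x, op e x = x;
  loop_right_id : forall x, op x e = x;
  loop_ldiv : forall a b, exists x, op a x = b /\ forall x', op a x' = b -> x' = x;
  loop_rdiv : forall a b, exists y, op y a = b /\ forall y', op y' a = b -> y' = y
}.

Record is_jordan_loop {Q : Type} (op : Q -> Q -> Q) (e : Q) : Prop := {
  jl_loop : is_loop op e;
  jl_comm : forall x y, op x y = op y x;
  jl_jordan : forall x y, op (op x x) (op y x) = op (op (op x x) y) x
}.

Fixpoint lpow {Q : Type} (op : Q -> Q -> Q) (e : Q) (y : Q) (k : nat) : Q :=
  match k with
  | O => e
  | S k' => op y (lpow op e y k')
  end.

(* Main.v *)
Require Import Defs.

Section S.
Variables (Q : Type) (op : Q -> Q -> Q) (e : Q) (HQ : is_jordan_loop op e).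

Let C := jl_comm _ _ HQ.
Let re : forall y, op y e = y := loop_right_id _ _ (jl_loop _ _ HQ).

Lemma canc u y1 y2 : op u y1 = op u y2 -> y1 = y2.
Proof.
  intro H. destruct (loop_ldiv _ _ (jl_loop _ _ HQ) u (op u y1)) as [z [_ U]].
  rewrite (U y1 eq_refl), (U y2 (eq_sym H)). reflexivity.
Qed.

Lemma J u y : op (op u u) (op u y) = op u (op (op u u) y).
Proof. rewrite (C u y), (jl_jordan _ _ HQ). apply C. Qed.

Lemma cube x : op x (op x (op x x)) = op (op x x) (op x x).
Proof. pose proof (J x x) as K. rewrite (C (op x x) x) in K. symmetry; exact K. Qed.

Lemma L1 x a : op x a = e -> op (op x x) a = x.
Proof.
  intro H. apply (canc x). pose proof (J x a) as K. rewrite H, re in K.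
  exact (eq_sym K).
Qed.

Lemma gen1 x a s t w c : op x a = e -> s = op x x -> t = op a a ->
  w = op s s -> c = op x s ->
  op s a = x /\ op s t = e /\ op c t = x /\ op c a = s /\ op x c = w /\ op w a = c.
Proof.
  intros H Hs Ht Hw Hc.
  assert (Ha : op a x = e) by (rewrite C; exact H).
  assert (g1 : op s a = x) by (rewrite Hs; apply L1; exact H).
  assert (g1' : op t x = a) by (rewrite Ht; apply L1; exact Ha).
  assert (g2 : op s t = e).
  { apply (canc x). rewrite re. pose proof (J x t) as K. rewrite <- Hs in K.
    rewrite (C x t), g1', g1 in K. exact (eq_sym K). }
  assert (xc : op x c = w) by (rewrite Hc, Hw, Hs; apply cube).
  assert (sc : op s c = op x w).
  { pose proof (J x s) as K. rewrite <- Hs, <- Hw, <- Hc in K. exact K. }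
  assert (wa : op w a = c).
  { apply (canc s). pose proof (J s a) as K. rewrite <- Hw, g1 in K.
    rewrite <- K, sc, C. reflexivity. }
  assert (wt : op w t = s).
  { apply (canc s). pose proof (J s t) as K. rewrite <- Hw, g2, re in K.
    rewrite Hw in K at 1. exact (eq_sym K). }
  assert (g3 : op c t = x).
  { pose proof (J a w) as K. rewrite <- Ht in K.
    rewrite (C a w), wa, (C t w), wt, (C a s), g1 in K. rewrite C; exact K. }
  assert (g4 : op c a = s).
  { pose proof (J a c) as K. rewrite <- Ht in K. rewrite (C t c), g3, Ha in K.
    apply (canc t). rewrite (C c a), K, C, g2. reflexivity. }
  tauto.
Qed.

End S.

Theorem lemma2p7 (Q : Type) (op : Q -> Q -> Q) (e : Q)
  (HQ : is_jordan_loop op e) (x xi : Q)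
  (Hinv_r : op x xi = e) (Hinv_l : op xi x = e) :
  (* (i) (x^2)^{-1} x = x^{-1}, with (x^2)^{-1} the two-sided inverse of x^2 *)
  (forall z, op (lpow op e x 2) z = e -> op z (lpow op e x 2) = e -> op z x = xi) /\
  (* (ii) *) op (lpow op e x 3) (lpow op e xi 2) = x /\
  (* (iii) *) op (lpow op e x 3) xi = lpow op e x 2 /\
  (* (iv) *) op (lpow op e x 4) (lpow op e xi 3) = x /\
  (* (v) *) op (lpow op e x 6) (lpow op e xi 2) = lpow op e x 4 /\
  (* (vi) *) op (lpow op e x 6) (lpow op e xi 4) = lpow op e x 2.
Proof.
  pose proof (jl_comm _ _ HQ) as C.
  pose proof (loop_right_id _ _ (jl_loop _ _ HQ)) as re.
  simpl. rewrite !re.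
  set (a := xi). set (s := op x x). set (t := op a a).
  set (w := op s s). set (c := op x s). set (c' := op a t).
  destruct (gen1 _ _ _ HQ x a s t w c Hinv_r eq_refl eq_refl eq_refl eq_refl)
    as [g1 [g2 [g3 [g4 [xc wa]]]]].
  destruct (gen1 _ _ _ HQ a x t s (op t t) c' Hinv_l eq_refl eq_refl eq_refl eq_refl)
    as [h1 [h2 [h3 [h4 [ac' _]]]]].
  assert (st : op s t = e) by exact g2.
  destruct (gen1 _ _ _ HQ s t w (op t t) (op w w) (op s w) st eq_refl eq_refl eq_refl eq_refl)
    as [k1 [k2 [k3 [k4 _]]]].
  assert (x6 : op x (op x (op x (op x (op x x)))) = op s w).
  { change (op x (op x (op x (op x s))) = op s w). fold c. rewrite xc.
    assert (sc : op s c = op x w).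
    { pose proof (J _ _ _ HQ x s) as K. exact K. }
    rewrite <- sc. pose proof (J _ _ _ HQ x c) as K. fold s in K. rewrite xc in K.
    exact (eq_sym K). }
  repeat split.
  - intros z Hz1 _. pose proof (J _ _ _ HQ x z) as K.
    fold s in K. rewrite Hz1, re in K.
    rewrite (C z x). apply (canc _ _ _ HQ s). rewrite g1. exact K.
  - exact g3.
  - exact g4.
  - change (op (op x c) c' = x). rewrite xc.
    apply (canc _ _ _ HQ s). pose proof (J _ _ _ HQ s c') as K. fold w in K.
    rewrite <- K. rewrite (C s c'), h3, wa. unfold c. apply C.
  - change (op (op x (op x (op x (op x (op x x))))) t = op x c). rewrite x6. rewrite xc. exact k4.
  - change (op (op x (op x (op x (op x (op x x))))) (op a c') = s). rewrite x6. rewrite ac'. exact k3.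
Qed.
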